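(* Let $A$ be a real $k\times n$ matrix and let $W$ be a nonnegative diagonal $n\times n$ matrix with trace $1$. Then there exists a $k$-element set $J\subseteq[n]$ such that \[ |\det A_J|^{1/k}\ge\sqrt{k/e}\cdot|\det AWA^T|^{1/(2k)} . \]
   Context: $[n]=\{1,\dots,n\}$; $A_J$ denotes the $k\times k$ submatrix of $A$ consisting of the columns indexed by $J$. *)

(* Defs.v *)
From HB Require Import structures.
From mathcomp Require Import all_boot all_order all_algebra.
From mathcomp Require Import reals sequences exp.
Set Implicit Arguments. Unset Strict Implicit. Unset Printing Implicit Defensive.
Import Order.TTheory GRing.Theory Num.Theory.
Local Open Scope ring_scope.

(* A_J : the k x k submatrix of A : 'M_(k,n) consisting of the columns indexed
   by J, taken in increasing order (enum of 'I_n is increasing).  Only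
   meaningful when #|J| = k; columns beyond #|J| are filled with 0. *)
Definition colsubset (R : nzRingType) (k n : nat) (A : 'M[R]_(k, n))
  (J : {set 'I_n}) : 'M[R]_k :=
  \matrix_(i < k, j < k)
    odflt 0 (omap (fun j' : 'I_#|J| => A i (enum_val j')) (insub (val j))).

(* Main.v *)
Require Import Defs.
From HB Require Import structures.
From mathcomp Require Import all_boot all_order all_algebra.
From mathcomp Require Import all_fingroup.
From mathcomp Require Import reals sequences exp.
From mathcomp Require Import ring lra.
Import Order.TTheory GRing.Theory Num.Theory.
Local Open Scope ring_scope.
Set Implicit Arguments. Unset Strict Implicit.


Lemma group_inj {R : realType} k n (x0 : 'I_n) (F : {ffun 'I_k -> 'I_n} -> R) :
  \sum_(f : {ffun 'I_k -> 'I_n} | injectiveb f) F f =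
  \sum_(J : {set 'I_n} | #|J| == k)
     \sum_(s : 'S_k) F [ffun i => nth x0 (enum J) (s i)].
Proof.
rewrite (partition_big (fun f : {ffun 'I_k -> 'I_n} => f @: [set: 'I_k])
   (fun J : {set 'I_n} => #|J| == k)) /=; last first.
  by move=> f /injectiveP fi; rewrite card_imset // cardsT card_ord.
apply: eq_bigr => J /eqP cJ.
set g := fun s : 'S_k => [ffun i => nth x0 (enum J) (s i)].
have szJ : size (enum J) = k by rewrite -cardE.
have uJ := enum_uniq (mem J).
have ginj : injective g.
  move=> s t /ffunP gst; apply/permP => i; move: (gst i); rewrite !ffunE.
  by move/eqP; rewrite nth_uniq ?szJ ?ltn_ord // => /eqP /val_inj.
transitivity (\sum_(f in g @: [set: 'S_k]) F f); last first.
  by rewrite big_imset /=; [apply: eq_bigl => s; rewrite in_setT | move=> ? ? _ _; apply: ginj].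
apply: eq_bigl => f; apply/andP/imsetP.
- case=> /injectiveP fi /eqP fJ.
  have fiJ i : f i \in enum J by rewrite mem_enum -fJ; apply: imset_f; rewrite in_setT.
  pose t := fun i => insubd i (index (f i) (enum J)) : 'I_k.
  have vt i : val (t i) = index (f i) (enum J).
    by rewrite val_insubd; have := index_mem (f i) (enum J); rewrite szJ fiJ => ->.
  have tinj : injective t.
    move=> i j /(congr1 val); rewrite !vt => eij; apply: fi.
    by rewrite -(nth_index x0 (fiJ i)) eij nth_index.
  exists (perm tinj); first by rewrite in_setT.
  by apply/ffunP => i; rewrite ffunE permE vt nth_index.
- case=> s _ ->; split.
    apply/injectiveP => i j; rewrite !ffunE => /eqP.
    by rewrite nth_uniq ?szJ ?ltn_ord // => /eqP /val_inj /perm_inj.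
  rewrite eqEcard; apply/andP; split.
    apply/subsetP => y /imsetP [i _ ->]; rewrite ffunE -mem_enum mem_nth //.
    by rewrite szJ ltn_ord.
  rewrite card_imset ?cardsT ?card_ord ?cJ //.
  move=> i j; rewrite !ffunE => /eqP.
  by rewrite nth_uniq ?szJ ?ltn_ord // => /eqP /val_inj /perm_inj.
Qed.
Lemma M_entry {R : realType} k n (A : 'M[R]_(k, n)) (W : 'M[R]_n) i j :
  is_diag_mx W ->
  (A *m W *m A^T) i j = \sum_l A i l * W l l * A j l.
Proof.
move=> /is_diag_mxP dW; rewrite !mxE; apply: eq_bigr => l _.
rewrite !mxE (bigD1 l) //= big1 ?addr0 // => m ml.
by rewrite dW ?mulr0 //.
Qed.

Lemma det_expand {R : realType} k n (M : 'M[R]_k) (A : 'M[R]_(k, n)) (w : 'I_n -> R) :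
  (forall i j, M i j = \sum_l A i l * w l * A j l) ->
  \det M = \sum_(f : {ffun 'I_k -> 'I_n})
     (\prod_i (A i (f i) * w (f i))) * \det (\matrix_(i, j) A j (f i)).
Proof.
move=> HM; rewrite /determinant.
under eq_bigr => s _ do (under eq_bigr => i _ do rewrite HM; rewrite bigA_distr_bigA big_distrr /=).
rewrite exchange_big /=; apply: eq_bigr => f _.
rewrite big_distrr /=; apply: eq_bigr => s _.
rewrite mulrCA; congr (_ * _).
rewrite -big_split /=; apply: eq_bigr => i _; rewrite mxE; ring.
Qed.

Lemma colsubsetE {R : realType} k n (x0 : 'I_n) (A : 'M[R]_(k, n)) (J : {set 'I_n}) :
  #|J| = k -> colsubset A J = \matrix_(i, j) A i (nth x0 (enum J) j).
Proof.
move=> cJ; apply/matrixP => i j; rewrite !mxE.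
have Hj : (val j < #|J|)%N by rewrite cJ ltn_ord.
case: insubP => [j' _ vj' /= | ]; last by rewrite Hj.
by rewrite (enum_val_nth x0) vj'.
Qed.

Lemma cauchy_binet {R : realType} k n (x0 : 'I_n) (M : 'M[R]_k) (A : 'M[R]_(k, n)) (w : 'I_n -> R) :
  (forall i j, M i j = \sum_l A i l * w l * A j l) ->
  \det M = \sum_(J : {set 'I_n} | #|J| == k)
     (\prod_(i < k) w (nth x0 (enum J) i)) * \det (colsubset A J) ^+ 2.
Proof.
move=> HM; rewrite (det_expand HM) (bigID (fun f : {ffun 'I_k -> 'I_n} => injectiveb f)) /=.
rewrite [X in _ + X]big1 ?addr0; last first.
  move=> f /injectivePn [i [j ij fij]].
  rewrite (@determinant_alternate _ _ _ i j) ?mulr0 // => c.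
  by rewrite !mxE fij.
rewrite (group_inj x0); apply: eq_bigr => J /eqP cJ.
rewrite (colsubsetE x0 _ cJ).
set h := fun j : 'I_k => nth x0 (enum J) j.
set AJ := \matrix_(i, j) A i (h j).
have detAJ : \det AJ = \sum_(s : 'S_k) (-1) ^+ s * \prod_i A i (h (s i)).
  by apply: eq_bigr => s _; congr (_ * _); apply: eq_bigr => i _; rewrite mxE.
transitivity (\sum_(s : 'S_k) (\prod_i w (h i)) * \det AJ * ((-1) ^+ s * \prod_i A i (h (s i)))); last first.
  by rewrite -big_distrr /= -detAJ expr2 mulrA.
apply: eq_bigr => s _.
have -> : \det (\matrix_(i, j) A j ([ffun i0 => h (s i0)] i)) = (-1) ^+ s * \det AJ.
  have -> : \matrix_(i, j) A j ([ffun i0 => h (s i0)] i) = row_perm s AJ^T.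
    by apply/matrixP => i j; rewrite !mxE ffunE.
  by rewrite row_permE det_mulmx det_perm det_tr.
have Pw : \prod_i w ([ffun i0 => h (s i0)] i) = \prod_i w (h i).
  by rewrite [RHS](reindex_inj (@perm_inj _ s)); apply: eq_bigr => i _; rewrite ffunE.
have Pa : \prod_i A i ([ffun i0 => h (s i0)] i) = \prod_i A i (h (s i)).
  by apply: eq_bigr => i _; rewrite ffunE.
rewrite big_split /= Pw Pa.
move: (\prod_i A i (h (s i))) (\prod_i w (h i)) ((-1) ^+ s : R) (\det AJ) => a b e d.
ring.
Qed.

Lemma ek_bound {R : realType} k n (x0 : 'I_n) (w : 'I_n -> R) :
  (forall l, 0 <= w l) -> \sum_l w l = 1 ->
  k`!%:R * \sum_(J : {set 'I_n} | #|J| == k) \prod_(i < k) w (nth x0 (enum J) i) <= 1.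
Proof.
move=> w0 w1.
have E : \sum_(f : {ffun 'I_k -> 'I_n} | injectiveb f) \prod_i w (f i) =
   k`!%:R * \sum_(J : {set 'I_n} | #|J| == k) \prod_(i < k) w (nth x0 (enum J) i).
  rewrite (group_inj x0) mulr_sumr; apply: eq_bigr => J _.
  transitivity (\sum_(s : 'S_k) \prod_(i < k) w (nth x0 (enum J) i)).
    apply: eq_bigr => s _.
    by rewrite [RHS](reindex_inj (@perm_inj _ s)); apply: eq_bigr => i _; rewrite ffunE.
  by rewrite sumr_const card_Sn mulr_natl.
rewrite -E.
have T : \sum_(f : {ffun 'I_k -> 'I_n}) \prod_i w (f i) = 1.
  by rewrite -(bigA_distr_bigA (fun (i : 'I_k) (l : 'I_n) => w l)) /= w1 big1_eq.
rewrite -[X in _ <= X]T [X in _ <= X](bigID (fun f : {ffun 'I_k -> 'I_n} => injectiveb f)) /=.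
by rewrite lerDl sumr_ge0 // => f _; rewrite prodr_ge0.
Qed.

Lemma fact_bound {R : realType} (k : nat) : (0 < k)%N -> (k%:R / expR 1) ^+ k <= k`!%:R :> R.
Proof.
case: k => // k _.
have := @expR_ge1Dxn R k.+1%:R k (ler0n _ _).
rewrite -[X in expR X]mulr1 expRM_natl => H.
have H2 : k.+1%:R ^+ k.+1 / k.+1`!%:R <= expR 1 ^+ k.+1 :> R.
  by apply: le_trans H; rewrite lerDr.
rewrite expr_div_n ler_pdivrMr ?exprn_gt0 ?expR_gt0 //.
by rewrite ler_pdivrMr ?ltr0n ?fact_gt0 // mulrC in H2.
Qed.

Lemma final {R : realType} (k : nat) (X D : R) : (0 < k)%N -> 0 <= X -> 0 <= D ->
  k`!%:R * X <= D ^+ 2 ->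
  Num.sqrt (k%:R / expR 1) * X `^ ((2 * k)%:R^-1) <= D `^ (k%:R^-1).
Proof.
move=> k0 X0 D0 H.
have c0 : 0 <= k%:R / expR 1 :> R by rewrite divr_ge0 ?ler0n ?expR_ge0.
have k2 : (0 < 2 * k)%N by rewrite muln_gt0.
rewrite -(ler_pXn2r k2) ?nnegrE ?mulr_ge0 ?sqrtr_ge0 ?powR_ge0 //.
rewrite exprMn exprM sqr_sqrtr //.
rewrite -!powR_mulrn ?powR_ge0 // -!powRrM.
have kR : k%:R != 0 :> R by rewrite pnatr_eq0 -lt0n.
have k2R : (2 * k)%:R != 0 :> R by rewrite pnatr_eq0 -lt0n.
rewrite mulVf // powRr1 //.
have -> : k%:R^-1 * (2 * k)%:R = 2%:R :> R by rewrite natrM; field.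
rewrite (powR_mulrn 2 D0).
apply: le_trans H; apply: ler_wpM2r => //; rewrite powR_mulrn //; exact: fact_bound.
Qed.

Unset Implicit Arguments.

Theorem lemma3p2 (R : realType) (k n : nat) (A : 'M[R]_(k, n)) (W : 'M[R]_n) :
  (k <= n)%N ->
  is_diag_mx W ->
  (forall i, 0 <= W i i) ->
  \tr W = 1 ->
  exists J : {set 'I_n}, #|J| = k /\
    Num.sqrt (k%:R / expR 1) * `|\det (A *m W *m A^T)| `^ ((2 * k)%:R^-1)
      <= `|\det (colsubset A J)| `^ (k%:R^-1).
Proof.
move=> hkn dW W0 trW.
case: (posnP k) => [k0 | kpos].
  subst k; exists set0; split; first by rewrite cards0.
  by rewrite mul0r sqrtr0 mul0r powR_ge0.
have x0 : 'I_n := Ordinal (leq_trans kpos hkn).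
set w := fun l => W l l.
set M := A *m W *m A^T.
have HM : forall i j, M i j = \sum_l A i l * w l * A j l.
  by move=> i j; exact: M_entry.
have CB := cauchy_binet x0 HM.
set J1 := [set widen_ord hkn i | i : 'I_k].
set P := fun J : {set 'I_n} => #|J| == k.
have cJ1 : P J1.
  rewrite /P card_imset ?cardsT ?card_ord //.
  by move=> i j /(congr1 val) /= /val_inj.
set F := fun J => `|\det (colsubset A J)|.
case: (@arg_maxP _ _ _ J1 P F cJ1) => J0 PJ0 Jmax.
exists J0; split; first exact/eqP.
apply: final => //; rewrite ?normr_ge0 //.
have Pge0 J : 0 <= \prod_(i < k) w (nth x0 (enum J) i).
  by apply: prodr_ge0 => i _; exact: W0.
have detM0 : 0 <= \det M.
  by rewrite CB sumr_ge0 // => J _; rewrite mulr_ge0 ?sqr_ge0.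
rewrite ger0_norm //.
have H1 : \det M <= (\sum_(J : {set 'I_n} | #|J| == k) \prod_(i < k) w (nth x0 (enum J) i)) * F J0 ^+ 2.
  rewrite CB mulr_suml; apply: ler_sum => J PJ; rewrite ler_wpM2l //.
  rewrite -real_normK ?num_real // ler_pXn2r ?nnegrE ?normr_ge0 //.
  exact: Jmax.
have H2 := @ek_bound R k n x0 w W0 trW.
apply: le_trans (ler_wpM2l (ler0n _ _) H1) _.
rewrite mulrA -[X in _ <= X]mul1r ler_wpM2r ?sqr_ge0 //.
Qed.
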